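(* Fix finite nonempty sets $A$ and $\Omega$, a prior $\mu_0$ on $\Omega$ with $\mu_0(\omega)>0$ for all $\omega$, and a finite message set $M$ with $|M|>\max\{|\Omega|,|A|\}$. There is a set of environments of Lebesgue measure one in $[0,1]^{2|A||\Omega|}$ such that, for every environment in this set: if cheap-talk Sender values randomization, then committed Sender values randomization.
   Context: An environment is a pair $(u_S,u_R)$ of functions $A\times\Omega\to[0,1]$, identified with a point of $[0,1]^{2|A||\Omega|}$. A messaging strategy is $\sigma:\Omega\to\Delta M$ and an action strategy is $\rho:M\to\Delta A$. For $i\in\{S,R\}$, $U_i(\sigma,\rho)=\sum_{\omega,m,a}\mu_0(\omega)\sigma(m|\omega)\rho(a|m)u_i(a,\omega)$. A profile $(\sigma,\rho)$ is S-BR if $\sigma\in\arg\max_{\sigma'}U_S(\sigma',\rho)$, and R-BR if $\rho\in\arg\max_{\rho'}U_R(\sigma,\rho')$. A persuasion profile is an R-BR profile; the persuasion payoff is the maximum of $U_S$ over persuasion profiles. A cheap-talk equilibrium is an S-BR and R-BR profile; the cheap-talk payoff is the maximum of $U_S$ over cheap-talk equilibria. $\sigma$ is partitional if for every $\omega$ some $m$ has $\sigma(m|\omega)=1$. The partitional persuasion payoff (resp. partitional cheap-talk payoff) is the maximum of $U_S$ over persuasion profiles (resp. cheap-talk equilibria) with partitional $\sigma$. Committed Sender values randomization if the persuasion payoff strictly exceeds the partitional persuasion payoff. Cheap-talk Sender values randomization if the cheap-talk payoff strictly exceeds the partitional cheap-talk payoff. *)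

(* Defs.v *)
From mathcomp Require Import all_boot all_order all_algebra.
From mathcomp Require Import reals.
Set Implicit Arguments. Unset Strict Implicit. Unset Printing Implicit Defensive.
Import Order.TTheory GRing.Theory Num.Theory.
Local Open Scope ring_scope.

Section Game.
Variables (R : realType) (A Omega M : finType).

Definition is_dist (T : finType) (p : T -> R) : Prop :=
  (forall x, 0 <= p x) /\ \sum_(x : T) p x = 1.

Definition msg_strategy (sigma : Omega -> M -> R) : Prop :=
  forall w, is_dist (sigma w).

Definition act_strategy (rho : M -> A -> R) : Prop :=
  forall m, is_dist (rho m).

Definition payoff (mu0 : Omega -> R) (u : A -> Omega -> R)
    (sigma : Omega -> M -> R) (rho : M -> A -> R) : R :=
  \sum_(w : Omega) \sum_(m : M) \sum_(a : A)
     mu0 w * sigma w m * rho m a * u a w.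

Definition S_BR mu0 (uS : A -> Omega -> R) sigma rho : Prop :=
  msg_strategy sigma /\ act_strategy rho /\
  forall sigma', msg_strategy sigma' -> payoff mu0 uS sigma' rho <= payoff mu0 uS sigma rho.

Definition R_BR mu0 (uR : A -> Omega -> R) sigma rho : Prop :=
  msg_strategy sigma /\ act_strategy rho /\
  forall rho', act_strategy rho' -> payoff mu0 uR sigma rho' <= payoff mu0 uR sigma rho.

Definition partitional (sigma : Omega -> M -> R) : Prop :=
  forall w, exists m, sigma w m = 1.

Definition is_max (P : (Omega -> M -> R) -> (M -> A -> R) -> Prop)
    (f : (Omega -> M -> R) -> (M -> A -> R) -> R) (v : R) : Prop :=
  (exists sigma rho, P sigma rho /\ f sigma rho = v) /\
  (forall sigma rho, P sigma rho -> f sigma rho <= v).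

Definition persuasion_profile mu0 (uR : A -> Omega -> R) sigma rho : Prop :=
  R_BR mu0 uR sigma rho.

Definition cheap_talk_eq mu0 (uS uR : A -> Omega -> R) sigma rho : Prop :=
  S_BR mu0 uS sigma rho /\ R_BR mu0 uR sigma rho.

Definition committed_values_randomization mu0 (uS uR : A -> Omega -> R) : Prop :=
  exists v v',
    is_max (persuasion_profile mu0 uR) (payoff mu0 uS) v /\
    is_max (fun s r => persuasion_profile mu0 uR s r /\ partitional s) (payoff mu0 uS) v' /\
    v' < v.

Definition cheap_talk_values_randomization mu0 (uS uR : A -> Omega -> R) : Prop :=
  exists v v',
    is_max (cheap_talk_eq mu0 uS uR) (payoff mu0 uS) v /\
    is_max (fun s r => cheap_talk_eq mu0 uS uR s r /\ partitional s) (payoff mu0 uS) v' /\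
    v' < v.

End Game.

(* Environments as points of [0,1]^(2|A||Omega|): coordinates indexed by
   bool * A * Omega; true = Sender, false = Receiver. *)
Definition env_uS (R : realType) (A Omega : finType) (e : bool * A * Omega -> R)
  : A -> Omega -> R := fun a w => e (true, a, w).
Definition env_uR (R : realType) (A Omega : finType) (e : bool * A * Omega -> R)
  : A -> Omega -> R := fun a w => e (false, a, w).

Definition unit_cube (R : realType) (I : finType) (x : I -> R) : Prop :=
  forall i, 0 <= x i <= 1.

Definition lebesgue_null (R : realType) (I : finType) (N : (I -> R) -> Prop) : Prop :=
  forall eps : R, 0 < eps ->
  exists (a b : nat -> I -> R),
    (forall k i, a k i <= b k i) /\
    (forall x, N x -> exists k, forall i, a k i <= x i <= b k i) /\
    (forall n, \sum_(k < n) \prod_(i : I) (b k i - a k i) <= eps).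

(* Main.v *)
Require Import Defs.
From mathcomp Require Import all_boot all_order all_algebra.
From mathcomp Require Import reals.
From mathcomp Require Import ring lra.
From mathcomp Require boolp.
From mathcomp Require all_classical all_reals all_analysis.
Set Implicit Arguments. Unset Strict Implicit. Unset Printing Implicit Defensive.
Import Order.TTheory GRing.Theory Num.Theory.
Local Open Scope ring_scope.

Section Game1.
Variables (R : realType) (A Omega M : finType) (mu0 : Omega -> R).
Implicit Types (u uR uS : A -> Omega -> R) (sigma : Omega -> M -> R) (rho : M -> A -> R)
  (b : M -> A) (f : Omega -> M).

Definition Wf (u : A -> Omega -> R) (sigma : Omega -> M -> R) (m : M) (a : A) : R :=
  \sum_(w : Omega) mu0 w * sigma w m * u a w.

Lemma payoffE u sigma rho :
  payoff mu0 u sigma rho = \sum_(m : M) \sum_(a : A) rho m a * Wf u sigma m a.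
Proof.
rewrite /payoff exchange_big; apply: eq_bigr => m _ /=.
rewrite exchange_big; apply: eq_bigr => a _ /=.
rewrite /Wf mulr_sumr; apply: eq_bigr => w _; ring.
Qed.

Definition rho_of (b : M -> A) : M -> A -> R := fun m a => (a == b m)%:R.
Definition sigma_of (f : Omega -> M) : Omega -> M -> R := fun w m => (m == f w)%:R.


Lemma sum_ind (T : finType) (F : T -> R) (y : T) :
  \sum_(x : T) (x == y)%:R * F x = F y.
Proof.
rewrite (bigD1 y) //= eqxx mul1r big1 ?addr0 //.
by move=> x /negbTE ->; rewrite mul0r.
Qed.

Lemma act_pure b : act_strategy (rho_of b).
Proof.
move=> m; split=> [a|]; first by rewrite /rho_of ler0n.
rewrite /rho_of -[RHS](sum_ind (fun _ => 1) (b m)); apply: eq_bigr => a _; by rewrite mulr1.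
Qed.

Lemma msg_part f : msg_strategy (sigma_of f).
Proof.
move=> w; split=> [m|]; first by rewrite /sigma_of ler0n.
rewrite /sigma_of -[RHS](sum_ind (fun _ => 1) (f w)); apply: eq_bigr => a _; by rewrite mulr1.
Qed.

Lemma payoff_pure u sigma b :
  payoff mu0 u sigma (rho_of b) = \sum_w \sum_m mu0 w * sigma w m * u (b m) w.
Proof.
rewrite /payoff; apply: eq_bigr => w _; apply: eq_bigr => m _.
rewrite -(sum_ind (fun a => mu0 w * sigma w m * u a w) (b m)).
apply: eq_bigr => a _; rewrite /rho_of; ring.
Qed.

Lemma payoff_part u f rho :
  payoff mu0 u (sigma_of f) rho = \sum_w \sum_a mu0 w * rho (f w) a * u a w.
Proof.
rewrite /payoff; apply: eq_bigr => w _.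
rewrite -(sum_ind (fun m => \sum_a mu0 w * rho m a * u a w) (f w)).
apply: eq_bigr => m _; rewrite mulr_sumr; apply: eq_bigr => a _; rewrite /sigma_of; ring.
Qed.

Lemma Wf_part u f m a :
  Wf u (sigma_of f) m a = \sum_(w in [set w | f w == m]) mu0 w * u a w.
Proof.
rewrite /Wf [RHS]big_mkcond /=; apply: eq_bigr => w _; rewrite inE /sigma_of eq_sym.
by case: eqP => _; rewrite ?mulr1 ?mulr0 ?mul0r.
Qed.

Lemma RBR_pure uR sigma b : msg_strategy sigma ->
  (forall m a, Wf uR sigma m a <= Wf uR sigma m (b m)) ->
  R_BR mu0 uR sigma (rho_of b).
Proof.
move=> hs hW; split=> //; split; first exact: act_pure.
move=> rho' hr; rewrite !payoffE; apply: ler_sum => m _.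
have -> : \sum_a rho_of b m a * Wf uR sigma m a = Wf uR sigma m (b m).
  by rewrite -(sum_ind (fun a => Wf uR sigma m a) (b m)).
have -> : Wf uR sigma m (b m) = \sum_a rho' m a * Wf uR sigma m (b m).
  by rewrite -mulr_suml (hr m).2 mul1r.
apply: ler_sum => a _; apply: ler_wpM2l; [exact: (hr m).1 | exact: hW].
Qed.

Lemma RBR_unique uR sigma rho m bm : R_BR mu0 uR sigma rho ->
  (forall a, a != bm -> Wf uR sigma m a < Wf uR sigma m bm) ->
  forall a, rho m a = (a == bm)%:R.
Proof.
move=> [hs [hr hbr]] hgap.
pose rho' := fun m'' a => if m'' == m then (a == bm)%:R else rho m'' a.
have hr' : act_strategy rho'.
  move=> m''; rewrite /rho'; case: eqP => _; last exact: hr.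
  exact: (act_pure (fun _ => bm) m'').
have := hbr rho' hr'; rewrite !payoffE (bigD1 m) //= [X in _ <= X](bigD1 m) //=.
have -> : \sum_(i | i != m) \sum_a rho' i a * Wf uR sigma i a =
          \sum_(i | i != m) \sum_a rho i a * Wf uR sigma i a.
  by apply: eq_bigr => i /negbTE hi; apply: eq_bigr => a _; rewrite /rho' hi.
rewrite lerD2r.
have -> : \sum_a rho' m a * Wf uR sigma m a = Wf uR sigma m bm.
  by rewrite /rho' eqxx (sum_ind (fun a => Wf uR sigma m a)).
move=> hle.
have hsum : \sum_a rho m a * (Wf uR sigma m bm - Wf uR sigma m a) = 0.
  apply/eqP; rewrite eq_le; apply/andP; split.
    have -> : \sum_a rho m a * (Wf uR sigma m bm - Wf uR sigma m a) =
       Wf uR sigma m bm * \sum_a rho m a - \sum_a rho m a * Wf uR sigma m a.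
      rewrite mulr_sumr -sumrB; apply: eq_bigr => a _; ring.
    by rewrite (hr m).2 mulr1 subr_le0.
  apply: sumr_ge0 => a _; apply: mulr_ge0; first exact: (hr m).1.
  have [->|hne] := eqVneq a bm; first by rewrite subrr.
  by rewrite subr_ge0 ltW // hgap.
have hnn : forall a', true -> 0 <= rho m a' * (Wf uR sigma m bm - Wf uR sigma m a').
  move=> a' _; apply: mulr_ge0; first exact: (hr m).1.
  have [->|hne'] := eqVneq a' bm; first by rewrite subrr.
  by rewrite subr_ge0 ltW // hgap.
have hz : forall a, a != bm -> rho m a = 0.
  move=> a hne.
  have := psumr_eq0P hnn hsum (i:=a) isT.
  have hp : 0 < Wf uR sigma m bm - Wf uR sigma m a by rewrite subr_gt0 hgap.
  move=> /eqP; rewrite mulf_eq0 => /orP[/eqP //|]; by rewrite (gt_eqF hp).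
move=> a; have [->|hne] := eqVneq a bm; last by rewrite hz.
have := (hr m).2; rewrite (bigD1 bm) //= big1 ?addr0 // => a' ha'; exact: hz.
Qed.

Lemma dist_one (T : finType) (p : T -> R) x : is_dist p -> p x = 1 ->
  forall y, p y = (y == x)%:R.
Proof.
move=> [h0 h1] hx.
have hs : \sum_(y | y != x) p y = 0.
  by move: h1; rewrite (bigD1 x) //= hx => h; lra.
move=> y; have [->|hne] := eqVneq y x; first by rewrite hx.
exact: (psumr_eq0P (fun i _ => h0 i) hs).
Qed.

Lemma part_sigma sigma : msg_strategy sigma -> partitional sigma ->
  exists f : Omega -> M, forall w m, sigma w m = sigma_of f w m.
Proof.
move=> hs hp; have [f hf] := fin_all_exists hp.
exists f => w m; exact: (dist_one (hs w) (hf w)).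
Qed.

End Game1.
Arguments sigma_of {R Omega M}.
Arguments rho_of {R A M}.


Lemma fin_pos_min (R : realType) (T : finType) (P : pred T) (F : T -> R) :
  (forall x, P x -> 0 < F x) -> exists d, 0 < d /\ forall x, P x -> d <= F x.
Proof.
move=> hF; exists (\big[Order.min/1]_(x | P x) F x); split.
  apply: (big_ind (fun y => 0 < y)); first exact: ltr01.
    by move=> x y hx hy; rewrite lt_min hx hy.
  exact: hF.
by move=> x hx; rewrite (bigD1 x) //= ge_min lexx.
Qed.

Lemma sum_ind1 (R : realType) (T : finType) (y : T) : \sum_(x : T) (x == y)%:R = 1 :> R.
Proof.
rewrite -[RHS](sum_ind (fun _ => 1) y); apply: eq_bigr => x _; by rewrite mulr1.
Qed.

Section Game2.
Variables (R : realType) (A Omega M : finType) (mu0 : Omega -> R).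
Implicit Types (u uR uS : A -> Omega -> R) (sigma : Omega -> M -> R) (rho : M -> A -> R)
  (b : M -> A) (f : Omega -> M).
Hypothesis hmu_pos : forall w, 0 < mu0 w.
Hypothesis hmu_sum : \sum_(w : Omega) mu0 w = 1.
Variables (uS uR : A -> Omega -> R).
Hypothesis huR : forall a w, 0 <= uR a w <= 1.
Variables (w1 : Omega) (a0 : A) (m0 : M).

Definition Gen := forall (S : {set Omega}), S != set0 -> forall a a' : A, a != a' ->
  \sum_(w in S) mu0 w * uR a w != \sum_(w in S) mu0 w * uR a' w.
Hypothesis hgen : Gen.

Lemma mu0_le1 w : mu0 w <= 1.
Proof.
rewrite -hmu_sum (bigD1 w) //= lerDl; apply: sumr_ge0 => x _; exact: ltW.
Qed.

Definition bset (S : {set Omega}) : A :=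
  Order.arg_max a0 xpredT (fun a => \sum_(w in S) mu0 w * uR a w).

Lemma bset_max (S : {set Omega}) a : \sum_(w in S) mu0 w * uR a w <= \sum_(w in S) mu0 w * uR (bset S) w.
Proof.
rewrite /bset; case: (arg_maxP (fun a => \sum_(w in S) mu0 w * uR a w) (isT : xpredT a0)).
by move=> i _ h; exact: h.
Qed.

Definition used f m := [exists w, f w == m].
Definition Sf f m : {set Omega} :=
  if used f m then [set w | f w == m] else [set w | f w == f w1].
Definition bf f m := bset (Sf f m).

Lemma bf_opt f m a : Wf mu0 uR (sigma_of f) m a <= Wf mu0 uR (sigma_of f) m (bf f m).
Proof.
rewrite !Wf_part /bf /Sf; case: (boolP (used f m)) => hu; first exact: bset_max.
rewrite !big1 // => w; rewrite inE => hw; case/negP: hu; apply/existsP; by exists w.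
Qed.

Lemma bf_unused f m : ~~ used f m -> bf f m = bf f (f w1).
Proof.
rewrite /bf /Sf => /negbTE ->.
have -> : used f (f w1) by apply/existsP; exists w1.
by [].
Qed.

Lemma bf_gap f m : used f m -> forall a, a != bf f m ->
  Wf mu0 uR (sigma_of f) m a < Wf mu0 uR (sigma_of f) m (bf f m).
Proof.
move=> hu a ha; rewrite lt_neqAle bf_opt andbT !Wf_part.
have hS : [set w | f w == m] != set0.
  case/existsP: hu => w hw; apply/set0Pn; exists w; by rewrite inE.
have := hgen hS ha; rewrite /bf /Sf hu; by [].
Qed.

Definition gapd f m := \big[Order.min/1]_(a | a != bf f m)
   (Wf mu0 uR (sigma_of f) m (bf f m) - Wf mu0 uR (sigma_of f) m a).

Lemma gapd_pos f m : used f m -> 0 < gapd f m.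
Proof.
move=> hu; apply: (big_ind (fun y => 0 < y)); first exact: ltr01.
  by move=> x y hx hy; rewrite lt_min hx hy.
by move=> a ha; rewrite subr_gt0 bf_gap.
Qed.

Lemma gapd_le f m a : a != bf f m ->
  gapd f m <= Wf mu0 uR (sigma_of f) m (bf f m) - Wf mu0 uR (sigma_of f) m a.
Proof. by move=> ha; rewrite /gapd (bigD1 a) //= ge_min lexx. Qed.

Lemma RBR_f f : R_BR mu0 uR (sigma_of f) (rho_of (bf f)).
Proof. apply: (RBR_pure (mu0:=mu0)); [exact: msg_part | exact: bf_opt]. Qed.

Lemma rho_part f rho : R_BR mu0 uR (sigma_of f) rho ->
  forall w a, rho (f w) a = rho_of (bf f) (f w) a.
Proof.
move=> hR w a; apply: (RBR_unique hR).
apply: bf_gap; apply/existsP; by exists w.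
Qed.

Lemma payoff_part_eq f rho : R_BR mu0 uR (sigma_of f) rho ->
  payoff mu0 uS (sigma_of f) rho = payoff mu0 uS (sigma_of f) (rho_of (bf f)).
Proof.
move=> hR; rewrite !payoff_part; apply: eq_bigr => w _; apply: eq_bigr => a _.
by rewrite (rho_part hR).
Qed.


Lemma sum_diff (T : finType) (F : T -> R) (x y : T) :
  \sum_(z : T) ((z == x)%:R - (z == y)%:R) * F z = F x - F y.
Proof.
rewrite -(sum_ind F x) -(sum_ind F y) -sumrB; apply: eq_bigr => z _; ring.
Qed.

Lemma IC f : (forall sigma rho, R_BR mu0 uR sigma rho ->
     payoff mu0 uS sigma rho <= payoff mu0 uS (sigma_of f) (rho_of (bf f))) ->
  forall w m', uS (bf f m') w <= uS (bf f (f w)) w.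
Proof.
move=> hmax.
suff hused : forall w m', used f m' -> uS (bf f m') w <= uS (bf f (f w)) w.
  move=> w m'; case: (boolP (used f m')) => hu; first exact: hused.
  rewrite bf_unused //; apply: hused; apply/existsP; by exists w1.
move=> w m' hu'.
have hu : used f (f w) by apply/existsP; exists w.
set m := f w.
have [->|hne] := eqVneq m' m; first exact: lexx.
rewrite leNgt; apply/negP => hlt.
have hd1 := gapd_pos hu; have hd2 := gapd_pos hu'.
pose t := Order.min 1 (Order.min (gapd f m) (gapd f m')).
have ht0 : 0 < t by rewrite !lt_min ltr01 hd1 hd2.
have ht1 : t <= 1 by rewrite /t ge_min lexx.
have htd1 : t <= gapd f m by rewrite /t !ge_min lexx orbT.
have htd2 : t <= gapd f m' by rewrite /t !ge_min lexx !orbT.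
pose c (m'' : M) : R := (m'' == m')%:R - (m'' == m)%:R.
pose sig := fun w'' m'' => sigma_of f w'' m'' + t * ((w'' == w)%:R * c m'').
have hsig : msg_strategy sig.
  move=> w''; split.
    move=> m''; rewrite /sig /sigma_of /c.
    have [ew|new] := eqVneq w'' w.
      rewrite ew -/m.
      have [em|nem] := eqVneq m'' m.
        rewrite em eq_sym (negbTE hne) /=; lra.
      by case: (m'' == m') => /=; lra.
    by rewrite /= mul0r mulr0 addr0 ler0n.
  rewrite /sig big_split /= (@msg_part R _ _ f w'').2.
  rewrite -mulr_sumr -mulr_sumr /c sumrB !sum_ind1 subrr !mulr0 addr0 //.
have hWt : forall m'' a, Wf mu0 uR sig m'' a =
   Wf mu0 uR (sigma_of f) m'' a + t * (mu0 w * c m'' * uR a w).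
  move=> m'' a; rewrite /Wf /sig.
  rewrite -(sum_ind (fun w'' => t * (mu0 w'' * c m'' * uR a w'')) w) -big_split /=.
  apply: eq_bigr => w'' _; ring.
have hR : R_BR mu0 uR sig (rho_of (bf f)).
  apply: (RBR_pure (mu0:=mu0)) => // m'' a; rewrite !hWt.
  have [hm''|hm''] := boolP ((m'' == m') || (m'' == m)).
    have hum : used f m'' by case/orP: hm'' => /eqP ->.
    have [->|hab] := eqVneq a (bf f m''); first exact: lexx.
    have hg := gapd_le hab.
    have htd : t <= gapd f m'' by case/orP: hm'' => /eqP ->.
    have hc : c m'' = 1 \/ c m'' = -1.
      rewrite /c; case/orP: hm'' => /eqP ->.
        by left; rewrite eqxx (negbTE hne) /=; lra.
      by right; rewrite eqxx eq_sym (negbTE hne) /=; lra.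
    have hmu1 := mu0_le1 w; have hmu0 := hmu_pos w.
    have [ha0 ha1] := andP (huR a w); have [hb0 hb1] := andP (huR (bf f m'') w).
    have hbd : mu0 w * c m'' * (uR a w - uR (bf f m'') w) <= 1.
      case: hc => ->; nra.
    nra.
  rewrite negb_or in hm''; case/andP: hm'' => h1 h2.
  rewrite /c (negbTE h1) (negbTE h2) /= subrr !(mulr0, mul0r, addr0); exact: bf_opt.
have hpay : payoff mu0 uS sig (rho_of (bf f)) =
   payoff mu0 uS (sigma_of f) (rho_of (bf f)) +
   t * (mu0 w * (uS (bf f m') w - uS (bf f m) w)).
  rewrite !payoff_pure /sig.
  rewrite -(sum_diff (fun m'' => uS (bf f m'') w)) mulr_sumr mulr_sumr.
  rewrite -(sum_ind (fun w'' => \sum_m'' t * (mu0 w'' * (c m'' * uS (bf f m'') w''))) w).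
  rewrite -big_split /=; apply: eq_bigr => w'' _.
  rewrite mulr_sumr -big_split /=; apply: eq_bigr => m'' _; rewrite /c; ring.
have := hmax _ _ hR; rewrite hpay.
have : 0 < t * (mu0 w * (uS (bf f m') w - uS (bf f m) w)).
  by rewrite !mulr_gt0 // subr_gt0.
lra.
Qed.

Lemma key vp : is_max (persuasion_profile (M:=M) mu0 uR) (payoff mu0 uS) vp ->
  cheap_talk_values_randomization M mu0 uS uR ->
  committed_values_randomization M mu0 uS uR.
Proof.
move=> [[sp [rp [hp hpv]]] hpmax].
move=> [vc [vc' [[[sc [rc [hc hcv]]] hcmax] [[hc'ex hc'max] hlt]]]].
pose P (g : {ffun Omega -> M}) := payoff mu0 uS (sigma_of g) (rho_of (bf g)).
pose g0 : {ffun Omega -> M} := [ffun _ => m0].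
pose gs := Order.arg_max g0 xpredT P.
have hgs : forall g, P g <= P gs.
  move=> g; rewrite /gs; case: (arg_maxP P (isT : xpredT g0)) => i _ h; exact: h.
have hpart : forall (s : Omega -> M -> R) (r : M -> A -> R), R_BR mu0 uR s r -> partitional s -> payoff mu0 uS s r <= P gs.
  move=> s r hR hp'; have [f hf] := part_sigma hR.1 hp'.
  have es : s = sigma_of f by apply: boolp.funext => w; apply: boolp.funext => m; exact: hf.
  subst s; rewrite payoff_part_eq //.
  have ef : (fun w => [ffun w => f w] w) = f by apply: boolp.funext => w; rewrite ffunE.
  have := hgs [ffun w => f w]; rewrite /P.
  have -> : (fun_of_fin [ffun w => f w]) = f by apply: boolp.funext => w; rewrite ffunE.
  by [].
exists vp, (P gs); split; first by split; [exists sp, rp | ].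
split.
  split; last by move=> s r [hR hp']; exact: hpart.
  exists (sigma_of gs), (rho_of (bf gs)); split => //; split; first exact: RBR_f.
  by move=> w; exists (gs w); rewrite /sigma_of eqxx.
have [//|hge] := ltP (P gs) vp.
exfalso.
have hmaxg : forall (s : Omega -> M -> R) (r : M -> A -> R), R_BR mu0 uR s r ->
    payoff mu0 uS s r <= payoff mu0 uS (sigma_of gs) (rho_of (bf gs)).
  by move=> s r h; apply: le_trans (hpmax s r h) hge.
have hic := IC hmaxg.
have hSBR : S_BR mu0 uS (sigma_of gs) (rho_of (bf gs)).
  split; first exact: msg_part.
  split; first exact: act_pure.
  move=> s' hs'; rewrite !payoff_pure; apply: ler_sum => w _.
  have -> : \sum_m mu0 w * sigma_of gs w m * uS (bf gs m) w = mu0 w * uS (bf gs (gs w)) w.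
    rewrite -(sum_ind (fun m => mu0 w * uS (bf gs m) w) (gs w)).
    by apply: eq_bigr => m _; rewrite /sigma_of; ring.
  have -> : mu0 w * uS (bf gs (gs w)) w = \sum_m mu0 w * s' w m * uS (bf gs (gs w)) w.
    rewrite -mulr_suml -mulr_sumr (hs' w).2; ring.
  apply: ler_sum => m _; apply: ler_wpM2l; last exact: hic.
  by apply: mulr_ge0; [exact: ltW | exact: (hs' w).1].
have h1 : P gs <= vc'.
  apply: hc'max; split; last by move=> w; exists (gs w); rewrite /sigma_of eqxx.
  split; [exact: hSBR | exact: RBR_f].
have h2 : vc <= vp by rewrite -hcv; apply: hpmax; exact: hc.2.
lra.
Qed.

End Game2.

Section Null.
Variables (R : realType) (I : finType) (i0 : I).

Definition fin_cover (N : (I -> R) -> Prop) (eps : R) :=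
  exists (J : finType) (a b : J -> I -> R),
    (forall j i, a j i <= b j i) /\
    (forall x, N x -> exists j, forall i, a j i <= x i <= b j i) /\
    \sum_(j : J) \prod_(i : I) (b j i - a j i) <= eps.

Lemma fin_null N : (forall eps, 0 < eps -> fin_cover N eps) -> lebesgue_null N.
Proof.
move=> hN eps heps; have [J [a [b [hab [hcov hvol]]]]] := hN eps heps.
pose s := [seq Some j | j <- enum J].
pose A' (o : option J) : I -> R := if o is Some j then a j else fun _ => 0.
pose B' (o : option J) : I -> R := if o is Some j then b j else fun _ => 0.
pose vol (o : option J) := \prod_(i : I) (B' o i - A' o i).
have hvol0 : forall o, 0 <= vol o.
  move=> o; apply: prodr_ge0 => i _; rewrite subr_ge0; case: o => [j|] //=.
have hvolN : vol None = 0 by rewrite /vol (bigD1 i0) //= subrr mul0r.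
exists (fun k => A' (nth None s k)), (fun k => B' (nth None s k)); split.
  by move=> k i; case: (nth None s k) => [j|] //=.
split.
  move=> x hx; have [j hj] := hcov x hx.
  exists (index (Some j) s); rewrite nth_index //.
  by rewrite /s mem_map ?mem_enum //; move=> ? ? [].
move=> n.
have hF : forall k, 0 <= vol (nth None s k) by move=> k; exact: hvol0.
rewrite -(big_mkord xpredT (fun k => vol (nth None s k))).
apply: (@le_trans _ _ (\sum_(0 <= k < n + size s) vol (nth None s k))).
  rewrite [X in _ <= X](big_cat_nat _ (n:=n)) //= ?leq_addr // lerDl.
  by apply: sumr_ge0 => k _; exact: hF.
rewrite (big_cat_nat _ (n:=size s)) //= ?leq_addl //.
rewrite [X in _ + X]big_nat_cond [X in _ + X]big1 ?addr0; last first.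
  by move=> k /andP[/andP[hk _] _]; rewrite nth_default.
rewrite -(big_nth None xpredT vol) big_map.
apply: le_trans hvol; rewrite enumT; exact: lexx.
Qed.

Lemma grid_bound (N : nat) (y : R) : 0 <= y <= 1 ->
  (minn (Num.trunc (y * N.+1%:R)) N)%:R / N.+1%:R <= y <=
  (minn (Num.trunc (y * N.+1%:R)) N)%:R / N.+1%:R + N.+1%:R^-1.
Proof.
move=> /andP[hy0 hy1].
have hn : 0 < N.+1%:R :> R by rewrite ltr0n.
have hy : 0 <= y * N.+1%:R by rewrite mulr_ge0 // ltW.
have /andP[hlo hhi] := truncn_itv hy.
set t := Num.trunc (y * N.+1%:R) in hlo hhi *.
set q := minn t N.
suff [h1 h2] : q%:R <= y * N.+1%:R /\ y * N.+1%:R <= q%:R + 1.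
  apply/andP; split; first by rewrite ler_pdivrMr.
  have -> : q%:R / N.+1%:R + N.+1%:R^-1 = (q%:R + 1) / N.+1%:R :> R by ring.
  by rewrite ler_pdivlMr.
have [htN|htN] := leqP t N.
  by rewrite /q (minn_idPl htN); split => //; rewrite natr1; exact: ltW.
rewrite /q (minn_idPr (ltnW htN)).
have hN : N.+1%:R <= y * N.+1%:R.
  by apply: le_trans hlo; rewrite ler_nat.
have hy1' : y = 1.
  apply/eqP; rewrite eq_le hy1 /=.
  by rewrite -(ler_pM2r hn) mul1r.
rewrite hy1' mul1r natr1; split; last exact: lexx.
by rewrite ler_nat.
Qed.

Lemma hyper_null (C : finType) (P : pred C) (lam : C -> I -> R) (j0 : C -> I) :
  (forall c, P c -> lam c (j0 c) != 0) ->
  lebesgue_null (fun x : I -> R =>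
     unit_cube x /\ exists c, P c /\ \sum_i lam c i * x i = 0).
Proof.
move=> hlam; apply: fin_null => eps heps.
pose Kc c := (\sum_i `|lam c i|) / `|lam c (j0 c)|.
have hKc : forall c, 0 <= Kc c.
  by move=> c; apply: divr_ge0; [apply: sumr_ge0 => i _|]; exact: normr_ge0.
pose K := \sum_c Kc c.
have hK : 0 <= K by apply: sumr_ge0 => c _.
pose N := Num.trunc (2 * K / eps).
pose nn := N.+1.
pose h : R := nn%:R^-1.
have hnn : 0 < nn%:R :> R by rewrite ltr0n.
have hh : 0 < h by rewrite invr_gt0.
have hnh : nn%:R * h = 1 by rewrite mulfV // gt_eqF.
have h2K : 2 * K * h <= eps.
  have h0 : 0 <= 2 * K / eps by rewrite divr_ge0 // ?mulr_ge0 // ltW.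
  have /andP[_ hlt] := truncn_itv h0.
  rewrite ltr_pdivrMr // in hlt.
  rewrite /h ler_pdivrMr // [eps * _]mulrC; exact: (ltW hlt).
pose J := (C * {ffun I -> 'I_nn})%type.
pose ctr c (g : {ffun I -> 'I_nn}) :=
  - (lam c (j0 c))^-1 * \sum_(i | i != j0 c) lam c i * ((g i)%:R * h).
pose ok c (g : {ffun I -> 'I_nn}) := (g (j0 c) == ord0) && P c.
pose a (j : J) i := if i == j0 j.1 then (if ok j.1 j.2 then ctr j.1 j.2 - Kc j.1 * h else 0)
                    else (j.2 i)%:R * h.
pose b (j : J) i := if i == j0 j.1 then (if ok j.1 j.2 then ctr j.1 j.2 + Kc j.1 * h else 0)
                    else (j.2 i)%:R * h + h.
exists J, a, b; split.
  move=> [c g] i; rewrite /a /b /=; case: (i == j0 c); last by rewrite lerDl ltW.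
  case: (ok c g) => //; have := hKc c; nra.
split.
  move=> x [hx [c [hPc hsum]]].
  pose g : {ffun I -> 'I_nn} := [ffun i => if i == j0 c then ord0
            else inord (minn (Num.trunc (x i * nn%:R)) N)].
  have hg : forall i, i != j0 c -> (g i)%:R * h <= x i <= (g i)%:R * h + h.
    move=> i hi; rewrite ffunE (negbTE hi) inordK; last by rewrite ltnS geq_minr.
    exact: grid_bound (hx i).
  have hok : ok c g by rewrite /ok ffunE eqxx eqxx hPc.
  exists (c, g) => i; rewrite /a /b /=.
  have [->|hi] := eqVneq i (j0 c); last exact: hg.
  rewrite hok.
  suff hb : `|x (j0 c) - ctr c g| <= Kc c * h.
    by move: hb; rewrite ler_norml => /andP[h1 h2]; apply/andP; split; lra.
  set l0 := lam c (j0 c).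
  have hl0 : l0 != 0 := hlam c hPc.
  move: hsum; rewrite (bigD1 (j0 c)) //= => hsum.
  have hx0 : x (j0 c) = - l0^-1 * \sum_(i | i != j0 c) lam c i * x i.
    apply: (mulfI hl0); rewrite mulrA mulrN mulfV // mulN1r.
    by apply/eqP; rewrite -subr_eq0 opprK hsum.
  rewrite hx0 /ctr -mulrBr normrM normrN normfV -sumrB.
  have hS : `|\sum_(i | i != j0 c) (lam c i * x i - lam c i * ((g i)%:R * h))|
            <= (\sum_i `|lam c i|) * h.
    apply: le_trans (ler_norm_sum _ _ _) _.
    apply: (@le_trans _ _ (\sum_(i | i != j0 c) `|lam c i| * h)).
      apply: ler_sum => i1 hi1; rewrite -mulrBr normrM ler_wpM2l //.
      by have := hg i1 hi1; rewrite ler_norml => /andP[h1 h2]; apply/andP; split; lra.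
    rewrite -mulr_suml ler_wpM2r //; first exact: ltW.
    by rewrite [X in _ <= X](bigD1 (j0 c)) //= lerDr normr_ge0.
  have -> : Kc c * h = `|l0|^-1 * ((\sum_i `|lam c i|) * h) by rewrite /Kc; ring.
  by rewrite ler_wpM2l // invr_ge0 normr_ge0.
pose wf c i (t : 'I_nn) := if i == j0 c then (if (t == ord0) && P c then 2 * Kc c * h else 0) else h.
have -> : \sum_(j : J) \prod_i (b j i - a j i) = \sum_c \sum_(g : {ffun I -> 'I_nn}) \prod_i wf c i (g i).
  rewrite -(pair_bigA _ (fun c g => \prod_i (b (c, g) i - a (c, g) i))) /=.
  apply: eq_bigr => c _; apply: eq_bigr => g _; apply: eq_bigr => i _.
  rewrite /a /b /wf /ok /=; case: eqP => [->|_]; last by ring.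
  by case: (_ && _); [ring | rewrite subrr].
apply: le_trans h2K; rewrite /K mulr_sumr mulr_suml; apply: ler_sum => c _.
have e1 : \prod_(i | i != j0 c) \sum_(t < nn) wf c i t = 1.
  apply: big1 => i /negbTE hi.
  rewrite /wf hi sumr_const card_ord -mulr_natl; exact: hnh.
have e2 : \sum_(t < nn) wf c (j0 c) t = if P c then 2 * Kc c * h else 0.
  rewrite (bigD1 ord0) //= big1 ?addr0; first by rewrite /wf eqxx eqxx.
  by move=> t /negbTE ht; rewrite /wf eqxx ht.
rewrite -bigA_distr_bigA /= (bigD1 (j0 c)) //= e1 e2 mulr1.
case: (P c); first exact: lexx.
apply: mulr_ge0; [apply: mulr_ge0; [lra | exact: hKc] | exact: ltW].
Qed.

End Null.

Module CompactPart.
Import all_classical all_reals all_analysis.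
Import Order.TTheory GRing.Theory Num.Theory.
Import numFieldNormedType.Exports.
Local Open Scope classical_set_scope.
Local Open Scope ring_scope.

Section Cont.
Variables (R : realType) (n : nat).
Local Notation V := 'rV[R]_n.

Lemma cont_sum (I : Type) (r : seq I) (P : pred I) (F : I -> V -> R) :
  (forall i, continuous (F i)) -> continuous (fun v => \sum_(i <- r | P i) F i v).
Proof.
move=> hF; elim: r => [|i r IH].
  under eq_fun do rewrite big_nil; exact: cst_continuous.
under eq_fun do rewrite big_cons.
case: (P i).
  by move=> x; apply: continuousD; [exact: hF | exact: IH].
exact: IH.
Qed.

Lemma cont_mul (F G : V -> R) : continuous F -> continuous G ->
  continuous (fun v => F v * G v).
Proof. by move=> hF hG x; apply: continuousM; [exact: hF | exact: hG]. Qed.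

Lemma cont_coord i : continuous (fun v : V => v ord0 i).
Proof. exact: coord_continuous. Qed.

Lemma cont_cst (c : R) : continuous (fun _ : V => c).
Proof. exact: cst_continuous. Qed.

Lemma closed_le_fun (F G : V -> R) : continuous F -> continuous G ->
  closed [set v | F v <= G v].
Proof.
move=> hF hG.
have -> : [set v | F v <= G v] = (fun v => G v - F v) @^-1` [set y : R | 0 <= y].
  by apply/seteqP; split => v /=; rewrite subr_ge0.
have hc : continuous (fun v => G v - F v).
  by move=> x; apply: continuousB; [exact: hG | exact: hF].
exact: (proj1 (continuous_closedP _) hc _ (@closed_ge R 0)).
Qed.

Lemma closed_eq_fun (F G : V -> R) : continuous F -> continuous G ->
  closed [set v | F v = G v].
Proof.
move=> hF hG.
have -> : [set v | F v = G v] = [set v | F v <= G v] `&` [set v | G v <= F v].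
  by apply/seteqP; split => v /=; [move=> ->; split | case=> h1 h2; apply/eqP; rewrite eq_le h1 h2].
by apply: closedI; apply: closed_le_fun.
Qed.

Lemma closed_forall (X : Type) (S : X -> set V) : (forall x, closed (S x)) ->
  closed [set v | forall x, S x v].
Proof.
move=> hS.
have -> : [set v | forall x, S x v] = \bigcap_(x in setT) S x.
  by apply/seteqP; split => v /= h x; [move=> _; exact: h | exact: h].
by apply: closed_bigI => x _; exact: hS.
Qed.

Lemma closed_and (S1 S2 : set V) : closed S1 -> closed S2 -> closed [set v | S1 v /\ S2 v].
Proof. move=> h1 h2; exact: closedI. Qed.

Lemma closed_imp (P : Prop) (S : set V) : closed S -> closed [set v | P -> S v].
Proof.
move=> hS; case: (pselect P) => hP.
  have -> : [set v | P -> S v] = S by apply/seteqP; split => v /=; [exact | move=> h _].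
  exact: hS.
have -> : [set v | P -> S v] = setT by apply/seteqP; split => v //= _ /hP.
exact: closedT.
Qed.

End Cont.

Section Compact.
Variables (R : realType) (A Omega M : finType) (mu0 : Omega -> R).
Variables (uS uR : A -> Omega -> R).
Local Notation I := ((Omega * M) + (M * A))%type.
Local Notation n := #|{: I}|.
Local Notation V := 'rV[R]_n.

Definition sg (v : V) : Omega -> M -> R := fun w m => v ord0 (enum_rank (inl (w, m) : I)).
Definition rh (v : V) : M -> A -> R := fun m a => v ord0 (enum_rank (inr (m, a) : I)).
Definition enc (s : Omega -> M -> R) (r : M -> A -> R) : V :=
  \row_(i < n) match enum_val i with inl p => s p.1 p.2 | inr p => r p.1 p.2 end.

Lemma sg_enc s r : sg (enc s r) = s.
Proof.
by apply: boolp.funext => w; apply: boolp.funext => m; rewrite /sg /enc mxE enum_rankK.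
Qed.

Lemma rh_enc s r : rh (enc s r) = r.
Proof.
by apply: boolp.funext => w; apply: boolp.funext => m; rewrite /rh /enc mxE enum_rankK.
Qed.

Lemma cont_payoff_r u (r : M -> A -> R) :
  continuous (fun v : V => payoff mu0 u (sg v) r).
Proof.
rewrite /payoff; apply: cont_sum => w; apply: cont_sum => m; apply: cont_sum => a.
apply: cont_mul; last exact: cont_cst.
apply: cont_mul; last exact: cont_cst.
apply: cont_mul; [exact: cont_cst | exact: cont_coord].
Qed.

Lemma cont_payoff u : continuous (fun v : V => payoff mu0 u (sg v) (rh v)).
Proof.
rewrite /payoff; apply: cont_sum => w; apply: cont_sum => m; apply: cont_sum => a.
apply: cont_mul; last exact: cont_cst.
apply: cont_mul; last exact: cont_coord.
apply: cont_mul; [exact: cont_cst | exact: cont_coord].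
Qed.

Lemma closed_RBR : closed [set v : V | R_BR mu0 uR (sg v) (rh v)].
Proof.
apply: closed_and.
  apply: closed_forall => w; apply: closed_and.
    apply: closed_forall => m; apply: closed_le_fun; [exact: cont_cst | exact: cont_coord].
  apply: closed_eq_fun; last exact: cont_cst.
  by apply: cont_sum => m; exact: cont_coord.
apply: closed_and.
  apply: closed_forall => m; apply: closed_and.
    apply: closed_forall => a; apply: closed_le_fun; [exact: cont_cst | exact: cont_coord].
  apply: closed_eq_fun; last exact: cont_cst.
  by apply: cont_sum => a; exact: cont_coord.
apply: closed_forall => r; apply: closed_imp.
apply: closed_le_fun; [exact: cont_payoff_r | exact: cont_payoff].
Qed.

Lemma dist_le1 (T : finType) (p : T -> R) x : is_dist p -> 0 <= p x <= 1.
Proof.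
move=> [h0 h1]; rewrite h0 /= -h1 (bigD1 x) //= lerDl; exact: sumr_ge0.
Qed.

Lemma persuasion_max (s0 : Omega -> M -> R) (r0 : M -> A -> R) : R_BR mu0 uR s0 r0 ->
  exists vp, is_max (persuasion_profile (M:=M) mu0 uR) (payoff mu0 uS) vp.
Proof.
move=> h0.
pose K := [set v : V | forall i, `[(0:R), 1]%classic (v ord0 i)] `&` [set v : V | R_BR mu0 uR (sg v) (rh v)].
have hK : compact K.
  apply: compact_closedI; last exact: closed_RBR.
  apply: (@rV_compact _ _ (fun _ => `[(0:R), 1]%classic)) => _; exact: segment_compact.
have hin : forall (s : Omega -> M -> R) (r : M -> A -> R), R_BR mu0 uR s r -> K (enc s r).
  move=> s r hR; split; last by rewrite /= sg_enc rh_enc.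
  move=> i /=; rewrite /enc mxE in_itv /=; case: (enum_val i) => [[w m]|[m a]] /=.
    exact: (dist_le1 _ (hR.1 w)).
  exact: (dist_le1 _ (hR.2.1 m)).
have hne : K !=set0 by exists (enc s0 r0); exact: hin.
have hc : {within K, continuous (fun v : V => payoff mu0 uS (sg v) (rh v))}.
  apply: continuous_subspaceT; exact: cont_payoff.
have [c hcK hmax] := EVT_max_rV hne hK hc.
exists (payoff mu0 uS (sg c) (rh c)); split.
  exists (sg c), (rh c); split => //; rewrite inE in hcK; exact: hcK.2.
move=> s r hR; have := hmax (enc s r); rewrite sg_enc rh_enc; apply.
rewrite inE; exact: hin.
Qed.

End Compact.

End CompactPart.
Import CompactPart.

Lemma null_mono (R : realType) (I : finType) (N N' : (I -> R) -> Prop) :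
  (forall x, N x -> N' x) -> lebesgue_null N' -> lebesgue_null N.
Proof.
move=> hN hN' eps heps; have [a [b [h1 [h2 h3]]]] := hN' eps heps.
by exists a, b; split => //; split => // x /hN /h2.
Qed.

Theorem corollary1 (R : realType) (A Omega M : finType)
  (mu0 : Omega -> R)
  (hA : (0 < #|A|)%N) (hOmega : (0 < #|Omega|)%N)
  (hmu_pos : forall w, 0 < mu0 w) (hmu_sum : \sum_(w : Omega) mu0 w = 1)
  (hM : (maxn #|Omega| #|A| < #|M|)%N) :
  exists G : (bool * A * Omega -> R) -> Prop,
    (forall e, G e -> unit_cube e) /\
    lebesgue_null (fun e => unit_cube e /\ ~ G e) /\
    forall e, G e ->
      cheap_talk_values_randomization M mu0 (env_uS e) (env_uR e) ->
      committed_values_randomization M mu0 (env_uS e) (env_uR e).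
Proof.
have [w1 _] := card_gt0P hOmega.
have [a0 _] := card_gt0P hA.
have hM0 : (0 < #|M|)%N by apply: leq_ltn_trans hM.
have [m0 _] := card_gt0P hM0.
exists (fun e => unit_cube e /\ Gen mu0 (env_uR e)); split; first by move=> e [].
split; last first.
  move=> e [hcube hgen] hct.
  have huR : forall a w, 0 <= env_uR e a w <= 1 by move=> a w; exact: hcube.
  have [vp hvp] := persuasion_max (env_uS e)
     (RBR_f mu0 (env_uR e) w1 a0 (fun _ : Omega => m0)).
  exact: (key hmu_pos hmu_sum huR w1 a0 m0 hgen hvp hct).
pose C := ({set Omega} * A * A)%type.
pose P (c : C) := (c.1.1 != set0) && (c.1.2 != c.2).
pose lam (c : C) (i : bool * A * Omega) : R :=
  if i.1.1 then 0 else (i.2 \in c.1.1)%:R * mu0 i.2 * ((i.1.2 == c.1.2)%:R - (i.1.2 == c.2)%:R).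
pose j0 (c : C) : bool * A * Omega := (false, c.1.2, odflt w1 [pick w in c.1.1]).
have hlam : forall c, P c -> lam c (j0 c) != 0.
  move=> [[S a] a'] /andP[/= hS ha].
  rewrite /lam /j0 /=.
  case: pickP => [w hw|hn]; last by case/set0Pn: hS => w; rewrite hn.
  rewrite hw eqxx (negbTE ha) /= mul1r subr0 mulr1; by rewrite (gt_eqF (hmu_pos w)).
apply: null_mono (hyper_null (false, a0, w1) hlam).
move=> e [hcube hng]; split => //.
have hsum : forall c : C, \sum_i lam c i * e i =
    \sum_(w in c.1.1) mu0 w * e (false, c.1.2, w) - \sum_(w in c.1.1) mu0 w * e (false, c.2, w).
  have E1 : forall F : bool * A * Omega -> R,
      \sum_i F i = \sum_(b : bool) \sum_(x : A) \sum_(w : Omega) F (b, x, w).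
    move=> F.
    have -> : \sum_i F i = \sum_(p : bool * A) \sum_w F (p, w).
      by rewrite pair_bigA; apply: eq_bigr => -[].
    by rewrite (pair_bigA _ (fun b x => \sum_w F (b, x, w))); apply: eq_bigr => -[].
  move=> [[S a] a'] /=; rewrite E1 big_bool /= big1 ?add0r; last first.
    by move=> x _; apply: big1 => w _; rewrite /lam /= mul0r.
  rewrite exchange_big -sumrB [RHS]big_mkcond /=; apply: eq_bigr => w _.
  case: (boolP (w \in S)) => hw.
    rewrite -mulrBr -(sum_diff (fun x => e (false, x, w)) a a') mulr_sumr.
    by apply: eq_bigr => x _; rewrite /lam /= hw mul1r; ring.
  by apply: big1 => x _; rewrite /lam /= (negbTE hw) /=; ring.
case: (boolP [exists c : C, P c && (\sum_i lam c i * e i == 0)]).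
  by case/existsP => c /andP[hP /eqP h0]; exists c.
move=> hne; exfalso; apply: hng; split => // S hS a a' ha; apply/negP => /eqP heq.
move/existsP: hne; apply; exists (S, a, a'); rewrite /P /= hS ha /=.
by rewrite hsum /= heq subrr.
Qed.
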